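(* Let $\mathcal{W}$ be a finite set, let $(X_t)_{t\ge 1}$ be a time-homogeneous first-order Markov chain on $\mathcal{W}$ with initial distribution $p_{x_1}$ and transition probabilities $q_x(x_{t+1}\mid x_t)$, and let $d:\mathcal{W}\times\mathcal{W}\to\mathbb{R}$ be a distortion measure and $\bar D$ a threshold. Consider the optimization problem $$\min_{\{q_t(y_t\mid x^t,y^{t-1})\}_{t\ge 1}} \ \lim_{n\to\infty}\frac1n\sum_{t=1}^n I^{\boldsymbol q}(X^t;Y_t\mid Y^{t-1})\quad\text{subject to}\quad \lim_{n\to\infty}\mathbb{E}\Big[\frac1n\sum_{t=1}^n d(X_t,Y_t)\Big]\le \bar D,$$ where the minimization is over the set $\mathcal{Q}_H$ of history-dependent release policies. Then there is no loss of optimality in restricting this minimization to the set $\mathcal{Q}_S\subseteq\mathcal{Q}_H$ of simplified policies, i.e. policies $\boldsymbol q_s=\{q^s_t(y_t\mid x_t,x_{t-1},y^{t-1})\}_{t\ge1}$. Furthermore, for any $\boldsymbol q_s\in\mathcal{Q}_S$ and any $n$, the induced information leakage satisfies $$I^{\boldsymbol q_s}(X^n;Y^n)=\sum_{t=1}^n I^{\boldsymbol q_s}(X_t,X_{t-1};Y_t\mid Y^{t-1})=\sum_{t=1}^n\ \sum_{y^t\in\mathcal{W}^t,\ x_t,x_{t-1}\in\mathcal{W}} P^{\boldsymbol q_s}(x_t,x_{t-1},y^t)\log\frac{q^s_t(y_t\mid x_t,x_{t-1},y^{t-1})}{P^{\boldsymbol q_s}(y_t\mid y^{t-1})}.$$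
   Context: Notation: $X^t=(X_1,\dots,X_t)$, $Y^{t-1}=(Y_1,\dots,Y_{t-1})$, with $Y^0$ empty; at $t=1$ terms involving $X_0$ are absent (e.g. $q_1(y_1\mid x_1)$). A history-dependent location release policy is a sequence $\boldsymbol q=\{q_t(y_t\mid x^t,y^{t-1})\}_{t\ge1}$ of conditional probability distributions on $\mathcal{W}$ (so $\sum_{y_t\in\mathcal W}q_t(y_t\mid x^t,y^{t-1})=1$); $\mathcal{Q}_H$ denotes the set of all such policies. The released locations $Y_t\in\mathcal{W}$ are generated so that the joint law is $$P^{\boldsymbol q}(X^n=x^n,Y^n=y^n)=p_{x_1}(x_1)q_1(y_1\mid x_1)\prod_{t=2}^n q_x(x_t\mid x_{t-1})\,q_t(y_t\mid x^t,y^{t-1}).$$ $I^{\boldsymbol q}$, $P^{\boldsymbol q}$ and the expectation denote mutual information, probabilities and expectation under this joint law. $\mathcal{Q}_S$ is the set of policies in $\mathcal{Q}_H$ of the form $q^s_t(y_t\mid x_t,x_{t-1},y^{t-1})$, i.e. depending on the true trajectory only through the current and previous true locations (and on the whole released history). *)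

(* Defs.v *)
From HB Require Import structures.
From mathcomp Require Import all_boot all_order all_algebra.
From mathcomp Require Import all_classical all_reals all_analysis.
Unset Printing Implicit Defensive.
Import Order.TTheory GRing.Theory Num.Theory.
Local Open Scope ring_scope.

Section Privacy.
Context {R : realType} {W : finType}.

Definition xlogr (p a : R) : R := if p == 0 then 0 else p * ln a.

Definition MI {A B : finType} (P : A -> B -> R) : R :=
  \sum_(a : A) \sum_(b : B)
     xlogr (P a b) (P a b / ((\sum_(b' : B) P a b') * (\sum_(a' : A) P a' b))).

Definition CMI {A B C : finType} (P : A -> B -> C -> R) : R :=
  \sum_(a : A) \sum_(b : B) \sum_(c : C)
     xlogr (P a b c)
       (P a b c * (\sum_(a' : A) \sum_(b' : B) P a' b' c)
        / ((\sum_(b' : B) P a b' c) * (\sum_(a' : A) P a' b c))).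

Definition is_pmf (p : W -> R) : Prop :=
  (forall x, 0 <= p x) /\ \sum_(x : W) p x = 1.

(* qx a b = q_x(X_{t+1} = b | X_t = a) *)
Definition is_kernel (qx : W -> W -> R) : Prop :=
  (forall a b, 0 <= qx a b) /\ (forall a, \sum_(b : W) qx a b = 1).

(* A history-dependent policy, 0-based time: q i xs ys y stands for
   q_{i+1}(y_{i+1} = y | x^{i+1} = xs, y^{i} = ys); only its values on
   |xs| = i+1, |ys| = i matter. *)
Definition policy := nat -> seq W -> seq W -> W -> R.

Definition is_policyH (q : policy) : Prop :=
  forall (i : nat) (xs : i.+1.-tuple W) (ys : i.-tuple W),
    (forall y, 0 <= q i xs ys y) /\ \sum_(y : W) q i xs ys y = 1.

Definition chainP (p1 : W -> R) (qx : W -> W -> R) (xs : seq W) : R :=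
  if xs is x :: s then p1 x * \prod_(pr <- zip xs s) qx pr.1 pr.2 else 1.

Definition polP (q : policy) (xs ys : seq W) : R :=
  \prod_(pr <- zip (iota 0 (size ys)) ys)
     q pr.1 (take pr.1.+1 xs) (take pr.1 ys) pr.2.

Definition jointP p1 qx (q : policy) (xs ys : seq W) : R :=
  chainP p1 qx xs * polP q xs ys.

(* (X_{t-1}, X_t) of a trajectory; X_0 absent is encoded as None *)
Definition lasttwo (xs : seq W) : option (option W * W) :=
  match rev xs with
  | [::] => None
  | [:: x] => Some (None, x)
  | x :: x' :: _ => Some (Some x', x)
  end.

(* simplified policies: qs i xprev x ys y = q^s_{i+1}(y | x_{i+1}=x, x_i=xprev, y^i = ys) *)
Definition spolicy := nat -> option W -> W -> seq W -> W -> R.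

Definition embedS (qs : spolicy) : policy :=
  fun i xs ys y => if lasttwo xs is Some (pw, w) then qs i pw w ys y else 0.

(* joint pmf of (X^t, Y_t, Y^{t-1}), t = i+1 *)
Definition P_hist p1 qx (q : policy) (i : nat)
  (xs : i.+1.-tuple W) (y : W) (yp : i.-tuple W) : R :=
  jointP p1 qx q xs (rcons yp y).

(* joint pmf of ((X_{t-1}, X_t), Y_t, Y^{t-1}), t = i+1 *)
Definition P_simp p1 qx (q : policy) (i : nat)
  (pr : option W * W) (y : W) (yp : i.-tuple W) : R :=
  \sum_(xs : i.+1.-tuple W | lasttwo xs == Some pr) jointP p1 qx q xs (rcons yp y).

Definition PY p1 qx (q : policy) (t : nat) (ys : seq W) : R :=
  \sum_(xs : t.-tuple W) jointP p1 qx q xs ys.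

Definition leakage p1 qx (q : policy) (n : nat) : R :=
  MI (fun xs ys : n.-tuple W => jointP p1 qx q xs ys).

Definition avg_leak p1 qx (q : policy) (n : nat) : R :=
  n%:R^-1 * \sum_(i < n) CMI (P_hist p1 qx q i).

Definition avg_dist p1 qx (d : W -> W -> R) (q : policy) (n : nat) : R :=
  \sum_(xs : n.-tuple W) \sum_(ys : n.-tuple W)
    jointP p1 qx q xs ys * (n%:R^-1 * \sum_(i < n) d (tnth xs i) (tnth ys i)).

(* the "lim" of the paper read as limit superior (equal to lim when it exists) *)
Definition objective p1 qx (q : policy) : \bar R :=
  limn_esup (fun n => (avg_leak p1 qx q n)%:E).

Definition feasible p1 qx d (Dbar : R) (q : policy) : Prop :=
  (limn_esup (fun n => (avg_dist p1 qx d q n)%:E) <= Dbar%:E)%E.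

Definition explicit_term p1 qx (qs : spolicy) (i : nat) : R :=
  \sum_(yp : i.-tuple W) \sum_(y : W) \sum_(pr : option W * W)
    xlogr (P_simp p1 qx (embedS qs) i pr y yp)
      (qs i pr.1 pr.2 yp y /
         (PY p1 qx (embedS qs) i.+1 (rcons yp y) / PY p1 qx (embedS qs) i yp)).

End Privacy.

(* Main.v *)
Require Import Defs.
From mathcomp Require Import all_boot all_order all_algebra.
From mathcomp Require Import all_classical all_reals all_analysis.
From mathcomp Require Import ring lra.
Import Order.TTheory GRing.Theory Num.Theory.
Local Open Scope ring_scope.
Section Generic.
Variable R : realType.

Lemma xlogrE (p a : R) : xlogr p a = p * ln a.
Proof. by rewrite /xlogr; case: eqP => [->|]; rewrite ?mul0r. Qed.

Lemma le_sum1 (I : finType) (F : I -> R) i : (forall j, 0 <= F j) -> F i <= \sum_j F j.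
Proof. by move=> H; rewrite (bigD1 i) //= lerDl sumr_ge0. Qed.

Lemma le_sum1P (I : finType) (P : pred I) (F : I -> R) i : P i -> (forall j, 0 <= F j) ->
  F i <= \sum_(j | P j) F j.
Proof. by move=> Pi H; rewrite (bigD1 i) //= lerDl sumr_ge0. Qed.

Definition Pc {A B C : finType} (Q : A -> B -> C -> R) c := \sum_(a : A) \sum_(b : B) Q a b c.
Definition Pac {A B C : finType} (Q : A -> B -> C -> R) a c := \sum_(b : B) Q a b c.
Definition Pbc {A B C : finType} (Q : A -> B -> C -> R) b c := \sum_(a : A) Q a b c.

Lemma CMIE {A B C : finType} (Q : A -> B -> C -> R) : CMI Q = \sum_a \sum_b \sum_c
   Q a b c * ln (Q a b c * Pc Q c / (Pac Q a c * Pbc Q b c)).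
Proof. by apply: eq_bigr => a _; apply: eq_bigr => b _; apply: eq_bigr => c _; rewrite xlogrE. Qed.

Arguments le_sum1 {I}.
Arguments le_sum1P {I}.

Variables (A A' B C : finType) (f : A -> A') (P : A -> B -> C -> R).
Hypothesis P0 : forall a b c, 0 <= P a b c.

Lemma sum_part (F : A -> R) : \sum_a' \sum_(a | f a == a') F a = \sum_a F a.
Proof. by rewrite [RHS](partition_big f predT). Qed.

Definition coarse (Q : A -> B -> C -> R) := fun a' b c => \sum_(a | f a == a') Q a b c.

Lemma coarse_sum (Q : A -> B -> C -> R) (G : A' -> B -> C -> R) :
  \sum_a' \sum_b \sum_c coarse Q a' b c * G a' b c = \sum_a \sum_b \sum_c Q a b c * G (f a) b c.
Proof.
transitivity (\sum_a' \sum_(a | f a == a') \sum_b \sum_c Q a b c * G (f a) b c).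
  apply: eq_bigr => a' _.
  under eq_bigr => b _ do under eq_bigr => c _ do rewrite /coarse mulr_suml.
  under eq_bigr => b _ do rewrite exchange_big /=.
  rewrite exchange_big /=; apply: eq_bigr => a /eqP <-; done.
by rewrite -sum_part.
Qed.

Lemma coarse_Pc c : Pc (coarse P) c = Pc P c.
Proof.
rewrite /Pc /coarse.
under eq_bigr => a' _ do rewrite exchange_big /=.
by rewrite sum_part.
Qed.

Lemma coarse_Pbc b c : Pbc (coarse P) b c = Pbc P b c.
Proof. by rewrite /Pbc /coarse sum_part. Qed.

Lemma coarse_Pac a' c : Pac (coarse P) a' c = \sum_(a | f a == a') Pac P a c.
Proof. by rewrite /Pac /coarse exchange_big. Qed.

Lemma coarse_ge0 a' b c : 0 <= coarse P a' b c.
Proof. by apply: sumr_ge0. Qed.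

Lemma Pac_ge a b c : P a b c <= Pac P a c.
Proof. exact: (le_sum1 (fun b => P a b c) b (fun j => P0 a j c)). Qed.
Lemma Pbc_ge a b c : P a b c <= Pbc P b c.
Proof. exact: (le_sum1 (fun a => P a b c) a (fun j => P0 j b c)). Qed.
Lemma Pc_ge a b c : P a b c <= Pc P c.
Proof.
apply: (le_trans (Pac_ge a b c)); rewrite /Pc /Pac.
apply: (le_sum1 (fun a => \sum_b P a b c) a) => j; exact: sumr_ge0.
Qed.
Lemma coarse_ge a b c : P a b c <= coarse P (f a) b c.
Proof. exact: (le_sum1P (fun a0 => f a0 == f a) (fun a => P a b c) a (eqxx (f a)) (fun j => P0 j b c)). Qed.

Lemma CMI_coarse_alt : CMI (coarse P) = \sum_a \sum_b \sum_c
   P a b c * ln (coarse P (f a) b c * Pc P c / (Pac (coarse P) (f a) c * Pbc P b c)).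
Proof.
rewrite CMIE -(coarse_sum P (fun a' b c => ln (coarse P a' b c * Pc P c / (Pac (coarse P) a' c * Pbc P b c)))); apply: eq_bigr => a' _; apply: eq_bigr => b _; apply: eq_bigr => c _.
by rewrite coarse_Pc coarse_Pbc.
Qed.

Lemma sum3B (F G : A -> B -> C -> R) : \sum_a \sum_b \sum_c (F a b c - G a b c) =
  \sum_a \sum_b \sum_c F a b c - \sum_a \sum_b \sum_c G a b c.
Proof.
rewrite -sumrB; apply: eq_bigr => a _; rewrite -sumrB; apply: eq_bigr => b _; by rewrite -sumrB.
Qed.

Lemma CMI_coarse_le : CMI (coarse P) <= CMI P.
Proof.
rewrite CMI_coarse_alt CMIE -subr_ge0 -sum3B.
pose Qf a b c := Pac P a c * coarse P (f a) b c / Pac (coarse P) (f a) c.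
have Qf0 a b c : 0 <= Qf a b c.
  by rewrite /Qf divr_ge0 ?mulr_ge0 ?sumr_ge0 // => *; rewrite ?sumr_ge0 // => *; apply: coarse_ge0.
apply: (@le_trans _ _ (\sum_a \sum_b \sum_c (P a b c - Qf a b c))).
  rewrite sum3B subr_ge0.
  have -> : \sum_a \sum_b \sum_c Qf a b c = \sum_a \sum_c Pac P a c *
      (Pac (coarse P) (f a) c / Pac (coarse P) (f a) c).
    apply: eq_bigr => a _; rewrite exchange_big; apply: eq_bigr => c _.
    by rewrite /Qf -mulr_suml -mulr_sumr mulrA.
  have -> : \sum_a \sum_b \sum_c P a b c = \sum_a \sum_c Pac P a c.
    by apply: eq_bigr => a _; rewrite exchange_big.
  apply: ler_sum => a _; apply: ler_sum => c _.
  have [->|nz] := eqVneq (Pac (coarse P) (f a) c) 0.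
    by rewrite invr0 !mulr0 sumr_ge0.
  by rewrite divff // mulr1.
apply: ler_sum => a _; apply: ler_sum => b _; apply: ler_sum => c _.
have [e0|pos] := eqVneq (P a b c) 0.
  by rewrite e0 !mul0r subrr sub0r oppr_le0.
have Ppos : 0 < P a b c by rewrite lt_def pos P0.
have hpos x : P a b c <= x -> 0 < x by move=> h; apply: lt_le_trans h.
have h1 := hpos _ (Pac_ge a b c).
have h2 := hpos _ (Pbc_ge a b c).
have h3 := hpos _ (Pc_ge a b c).
have h4 := hpos _ (coarse_ge a b c).
have h5 : 0 < Pac (coarse P) (f a) c.
  apply: lt_le_trans h4 _; exact: (le_sum1 (fun b => coarse P (f a) b c) b (fun j => coarse_ge0 (f a) j c)).
set X := P a b c * Pc P c / (Pac P a c * Pbc P b c).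
set Y := coarse P (f a) b c * Pc P c / (Pac (coarse P) (f a) c * Pbc P b c).
have X0 : 0 < X by rewrite /X divr_gt0 ?mulr_gt0.
have Y0 : 0 < Y by rewrite /Y divr_gt0 ?mulr_gt0.
have key : ln (Y / X) <= Y / X - 1.
  have := @le_ln1Dx R (Y / X - 1); rewrite (addrC 1) subrK; apply.
  have : 0 < Y / X by exact: divr_gt0.
  lra.
rewrite ln_div ?posrE // in key.
have QE : Qf a b c = P a b c * (Y / X).
  rewrite /Qf /X /Y; field.
  by rewrite !lt0r_neq0.
have k2 : P a b c * (1 - Y / X) <= P a b c * (ln X - ln Y) by rewrite ler_pM2l //; lra.
rewrite QE; move: k2; rewrite !mulrBr mulr1; lra.
Qed.

Lemma CMI_coarse_eq (K : A' -> B -> C -> R) :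
  (forall a b c, P a b c = Pac P a c * K (f a) b c) -> CMI (coarse P) = CMI P.
Proof.
move=> HK; rewrite CMI_coarse_alt CMIE.
apply: eq_bigr => a _; apply: eq_bigr => b _; apply: eq_bigr => c _.
have [e0|pos] := eqVneq (P a b c) 0; first by rewrite e0 !mul0r.
have Ppos : 0 < P a b c by rewrite lt_def pos P0.
have h1 : 0 < Pac P a c by apply: lt_le_trans (Pac_ge a b c).
have h2 : 0 < Pbc P b c by apply: lt_le_trans (Pbc_ge a b c).
set S := \sum_(a'' | f a'' == f a) Pac P a'' c.
have hS : 0 < S by apply: lt_le_trans h1 _; apply: (le_sum1P (fun a0 => f a0 == f a) (fun a => Pac P a c) a (eqxx _)) => j; apply: sumr_ge0.
have E1 : coarse P (f a) b c = S * K (f a) b c.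
  rewrite /coarse /S mulr_suml; apply: eq_bigr => a'' /eqP <-; exact: HK.
rewrite E1 coarse_Pac -/S [in RHS](HK a b c); congr (_ * ln _); first exact: HK.
by field; rewrite !lt0r_neq0.
Qed.

End Generic.

Section Seq.
Variables (R : realType) (W : finType) (p1 : W -> R) (qx : W -> W -> R).
Hypothesis Hp : is_pmf p1.
Hypothesis Hk : is_kernel qx.

Fixpoint mc (a : W) (s : seq W) : R := if s is b :: s' then qx a b * mc b s' else 1.

Lemma prod_zip_mc a s : \prod_(pr <- zip (a :: s) s) qx pr.1 pr.2 = mc a s.
Proof. by elim: s a => [|b s IH] a /=; [rewrite big_nil | rewrite big_cons IH]. Qed.

Lemma mc_rcons a s z : mc a (rcons s z) = mc a s * qx (last a s) z.
Proof. by elim: s a => [|b s IH] a /=; [rewrite mul1r mulr1 | rewrite IH mulrA]. Qed.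

Definition olast (s : seq W) := if s is a :: s' then Some (last a s') else None.
Definition tr (s : seq W) z := if olast s is Some a then qx a z else p1 z.

Lemma chainP_rcons s z : chainP p1 qx (rcons s z) = chainP p1 qx s * tr s z.
Proof.
case: s => [|a s]; rewrite /chainP /tr /=; first by rewrite big_nil mulr1 mul1r.
by rewrite !prod_zip_mc mc_rcons mulrA.
Qed.

Lemma tr_ge0 s z : 0 <= tr s z.
Proof. by rewrite /tr; case: (olast s) => [a|]; [apply: Hk.1 | apply: Hp.1]. Qed.

Lemma tr_sum s : \sum_z tr s z = 1.
Proof. by rewrite /tr; case: (olast s) => [a|]; [apply: Hk.2 | apply: Hp.2]. Qed.

Lemma chainP_ge0 s : 0 <= chainP p1 qx s.
Proof.
rewrite /chainP; case: s => [|a s] //; rewrite mulr_ge0 //; first exact: Hp.1.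
by apply: prodr_ge0 => pr _; apply: Hk.1.
Qed.

Lemma lasttwo_rcons s z : lasttwo (rcons s z) = Some (olast s, z).
Proof.
rewrite /lasttwo rev_rcons; case: s => [|a s] //=.
by rewrite lastI rev_rcons.
Qed.

Lemma zip_iota_lt k n (s : seq W) pr : pr \in zip (iota k n) s -> (pr.1 < k + n)%N.
Proof.
elim: n k s => [|n IH] k [|y s] //=; rewrite in_cons => /orP[/eqP -> /=|/IH].
  by rewrite addnS ltnS leq_addr.
by rewrite addSnnS.
Qed.

Lemma polP_rcons (Q : @policy R W) xs ys y :
  polP Q xs (rcons ys y) = polP Q xs ys * Q (size ys) (take (size ys).+1 xs) ys y.
Proof.
rewrite /polP size_rcons -addn1 iotaD add0n -cats1 zip_cat ?size_iota // big_cat /=.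
rewrite big_cons big_nil mulr1 take_size_cat //; congr (_ * _).
apply: eq_big_seq => pr /zip_iota_lt; rewrite add0n => H.
by rewrite takel_cat // ltnW.
by rewrite /= addn1.
Qed.

Lemma polP_rcons_x (Q : @policy R W) xs x ys : (size ys <= size xs)%N ->
  polP Q (rcons xs x) ys = polP Q xs ys.
Proof.
move=> H; rewrite /polP; apply: eq_big_seq => pr /zip_iota_lt; rewrite add0n => H'.
by rewrite -cats1 takel_cat // (leq_trans H' H).
Qed.

Lemma HQs (Q : @policy R W) i xs ys : is_policyH Q -> size xs = i.+1 -> size ys = i ->
  (forall y, 0 <= Q i xs ys y) /\ \sum_y Q i xs ys y = 1.
Proof. by move=> HQ Hx Hy; have := HQ i (Tuple (introT eqP Hx)) (Tuple (introT eqP Hy)). Qed.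

Lemma polP_ge0 (Q : @policy R W) xs ys : is_policyH Q -> (size ys <= size xs)%N -> 0 <= polP Q xs ys.
Proof.
move=> HQ H; rewrite /polP big_seq_cond; apply: prodr_ge0 => pr /andP[/zip_iota_lt H' _].
rewrite add0n in H'.
have [||H1 _] := @HQs Q pr.1 (take pr.1.+1 xs) (take pr.1 ys) HQ; last exact: H1.
  by rewrite size_takel // (leq_trans H' H).
by rewrite size_takel // ltnW.
Qed.

Lemma polP_nil (Q : @policy R W) xs : polP Q xs [::] = 1.
Proof. by rewrite /polP /= big_nil. Qed.

Lemma jointP_ge0 (Q : @policy R W) xs ys : is_policyH Q -> (size ys <= size xs)%N -> 0 <= jointP p1 qx Q xs ys.
Proof. by move=> HQ H; rewrite /jointP mulr_ge0 ?chainP_ge0 ?polP_ge0. Qed.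

Lemma jointP_rcons2 (Q : @policy R W) xs x ys y : size ys = size xs ->
  jointP p1 qx Q (rcons xs x) (rcons ys y) =
  jointP p1 qx Q xs ys * tr xs x * Q (size ys) (rcons xs x) ys y.
Proof.
move=> H; rewrite /jointP chainP_rcons polP_rcons polP_rcons_x ?H //.
rewrite take_oversize ?size_rcons ?H //.
by rewrite -!mulrA; congr (_ * _); rewrite mulrCA.
Qed.

Lemma jointP_rcons_x (Q : @policy R W) xs x ys : (size ys <= size xs)%N ->
  jointP p1 qx Q (rcons xs x) ys = jointP p1 qx Q xs ys * tr xs x.
Proof. by move=> H; rewrite /jointP chainP_rcons polP_rcons_x // mulrAC. Qed.

Lemma jointP_rcons_y (Q : @policy R W) xs ys y : size xs = (size ys).+1 ->
  jointP p1 qx Q xs (rcons ys y) = jointP p1 qx Q xs ys * Q (size ys) xs ys y.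
Proof. by move=> H; rewrite /jointP polP_rcons take_oversize ?H // mulrA. Qed.

Lemma sum_tuple_rcons n (F : n.+1.-tuple W -> R) :
  \sum_(t : n.+1.-tuple W) F t = \sum_(t : n.-tuple W) \sum_(x : W) F [tuple of rcons t x].
Proof.
rewrite pair_big /=.
pose h (p : n.-tuple W * W) : n.+1.-tuple W := [tuple of rcons p.1 p.2].
pose g (t : n.+1.-tuple W) : n.-tuple W * W :=
  ([tuple of belast (thead t) (behead t)], last (thead t) (behead t)).
rewrite (reindex h) /=; last first.
  exists g => [[t x] _|t _].
    apply/eqP; rewrite xpair_eqE /=; apply/andP; split; last first.
      case: t => [[|a s] Hs] //=; by rewrite last_rcons.
    apply/eqP/val_inj => /=; case: t => [[|a s] Hs] //=.
    by rewrite belast_rcons.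
  apply/val_inj => /=; rewrite -lastI.
  by rewrite [in RHS](tuple_eta t).
by [].
Qed.

Lemma sum_tuple0 (F : 0.-tuple W -> R) : \sum_(t : 0.-tuple W) F t = F [tuple].
Proof.
rewrite (big_pred1 [tuple]) // => t /=; apply/esym/eqP/val_inj.
by case: t => [[|]].
Qed.


Lemma sum_ind (T : finType) (a : T) (F : T -> R) : \sum_x (x == a)%:R * F x = F a.
Proof.
by rewrite (bigD1 a) //= eqxx mul1r big1 ?addr0 // => x /negbTE ->; rewrite mul0r.
Qed.

Lemma olast_rcons s z : olast (rcons s z) = Some z.
Proof. by case: s => [|a s] //=; rewrite last_rcons. Qed.

Lemma tr_rcons s z w : tr (rcons s z) w = qx z w.
Proof. by rewrite /tr olast_rcons. Qed.

Lemma sum_lasttwo1 m pr (G : seq W -> R) :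
  \sum_(xs : m.+1.-tuple W | lasttwo xs == Some pr) G xs =
  \sum_(t : m.-tuple W) \sum_x ((olast t, x) == pr)%:R * G (rcons t x).
Proof.
rewrite big_mkcond sum_tuple_rcons; apply: eq_bigr => t _; apply: eq_bigr => x _ /=.
rewrite lasttwo_rcons.
have -> : (Some (olast t, x) == Some pr) = ((olast t, x) == pr) by [].
by case: eqP; rewrite ?mul1r ?mul0r.
Qed.

Lemma sum_lasttwo m (F : seq W -> option W * W -> R) :
  \sum_pr \sum_(xs : m.+1.-tuple W | lasttwo xs == Some pr) F xs pr =
  \sum_(t : m.-tuple W) \sum_x F (rcons t x) (olast t, x).
Proof.
under eq_bigr => pr _ do rewrite (sum_lasttwo1 m pr (F ^~ pr)).
rewrite exchange_big; apply: eq_bigr => t _; rewrite exchange_big; apply: eq_bigr => x _.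
rewrite (bigD1 (olast t, x)) //= eqxx mul1r big1 ?addr0 // => pr /negbTE.
by rewrite eq_sym => ->; rewrite mul0r.
Qed.

Definition PsS (Q : @policy R W) m pr y (yp : seq W) :=
  \sum_(xs : m.+1.-tuple W | lasttwo xs == Some pr) jointP p1 qx Q xs (rcons yp y).
Definition Mf (Q : @policy R W) m pr (yp : seq W) :=
  \sum_(xs : m.+1.-tuple W | lasttwo xs == Some pr) jointP p1 qx Q xs yp.

Lemma PsS_sum Q m pr yp : is_policyH Q -> size yp = m ->
  \sum_y PsS Q m pr y yp = Mf Q m pr yp.
Proof.
move=> HQ Hy; rewrite /PsS exchange_big; apply: eq_bigr => xs _.
under eq_bigr => y _ do rewrite jointP_rcons_y ?size_tuple ?Hy //.
by rewrite -mulr_sumr (@HQs Q m xs yp HQ (size_tuple xs) Hy).2 mulr1.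
Qed.

Lemma PsS_embed qs m pr y yp : size yp = m ->
  PsS (embedS qs) m pr y yp = Mf (embedS qs) m pr yp * qs m pr.1 pr.2 yp y.
Proof.
move=> Hy; rewrite /PsS /Mf mulr_suml; apply: eq_bigr => xs /eqP E.
rewrite jointP_rcons_y ?size_tuple ?Hy //; congr (_ * _).
by rewrite /embedS E; case: pr {E}.
Qed.

Lemma PsS_ge0 Q m pr y yp : is_policyH Q -> size yp = m -> 0 <= PsS Q m pr y yp.
Proof.
move=> HQ Hy; apply: sumr_ge0 => xs _; apply: jointP_ge0 => //.
by rewrite size_rcons size_tuple Hy.
Qed.

Lemma Mf_ge0 Q m pr yp : is_policyH Q -> size yp = m -> 0 <= Mf Q m pr yp.
Proof.
move=> HQ Hy; apply: sumr_ge0 => xs _; apply: jointP_ge0 => //.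
by rewrite size_tuple Hy.
Qed.

Lemma Mf0 Q Q' pr yp : size yp = 0%N -> Mf Q 0 pr yp = Mf Q' 0 pr yp.
Proof.
move/size0nil => ->; apply: eq_bigr => xs _; by rewrite /jointP !polP_nil.
Qed.

Lemma sum_PsS_pw Q m z y yp :
  \sum_pw PsS Q m (pw, z) y yp = \sum_(t : m.-tuple W) jointP p1 qx Q (rcons t z) (rcons yp y).
Proof.
rewrite /PsS; under eq_bigr => pw _ do rewrite (sum_lasttwo1 m (pw, z) (fun xs => jointP p1 qx Q xs (rcons yp y))).
rewrite exchange_big; apply: eq_bigr => t _.
rewrite (bigD1 (olast t)) //= [X in _ + X]big1 ?addr0.
  rewrite (bigD1 z) //= eqxx mul1r big1 ?addr0 // => x /negbTE nx.
  by rewrite xpair_eqE nx andbF mul0r.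
move=> pw /negbTE npw; apply: big1 => x _.
by rewrite xpair_eqE eq_sym npw mul0r.
Qed.

Lemma Mf_step Q m pw w yp y : size yp = m ->
  Mf Q m.+1 (pw, w) (rcons yp y) =
  \sum_z (Some z == pw)%:R * qx z w * \sum_pw' PsS Q m (pw', z) y yp.
Proof.
move=> Hy; rewrite /Mf (sum_lasttwo1 m.+1 (pw, w) (fun xs => jointP p1 qx Q xs (rcons yp y))).
under eq_bigr => t _ do under eq_bigr => x _ do
  rewrite jointP_rcons_x ?size_rcons ?size_tuple ?Hy //.
transitivity (\sum_(t : m.+1.-tuple W) (olast t == pw)%:R *
     (jointP p1 qx Q t (rcons yp y) * tr t w)).
  apply: eq_bigr => t _; case: eqP => E /=.
    under eq_bigr => x _ do rewrite xpair_eqE E eqxx /=.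
    by rewrite sum_ind mul1r.
  rewrite mul0r big1 // => x _; rewrite xpair_eqE.
  by move/eqP/negbTE: E => ->; rewrite mul0r.
rewrite sum_tuple_rcons.
under [RHS]eq_bigr => z _ do rewrite sum_PsS_pw mulr_sumr.
rewrite exchange_big; apply: eq_bigr => t _; apply: eq_bigr => z _ /=.
by rewrite olast_rcons tr_rcons; ring.
Qed.


Lemma lasttwo_tuple m (xs : m.+1.-tuple W) : exists pr, lasttwo xs = Some pr.
Proof.
case: xs => [[|a s] Hs] //=; rewrite lastI lasttwo_rcons; by eexists.
Qed.

Arguments lasttwo_tuple {m} xs.

Definition qsOf (q : @policy R W) : @spolicy R W := fun m pw w yp y =>
  if Mf q m (pw, w) yp == 0 then #|W|%:R^-1 else PsS q m (pw, w) y yp / Mf q m (pw, w) yp.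

Lemma qsOf_policy q : is_policyH q -> is_policyH (embedS (qsOf q)).
Proof.
move=> HQ i xs ys; have [[pw w] E] := lasttwo_tuple xs.
rewrite /embedS E /qsOf; have Hy := size_tuple ys.
case: eqP => M0.
  split=> [y|]; first by rewrite invr_ge0 ler0n.
  have W0 : (0 < #|W|)%N by apply/card_gt0P; exists (thead xs).
  rewrite sumr_const -[_ *+ _]mulr_natr mulVf //.
  by rewrite pnatr_eq0 -lt0n.
split=> [y|]; first by rewrite divr_ge0 ?PsS_ge0 ?Mf_ge0.
by rewrite -mulr_suml PsS_sum // divff //; apply/eqP.
Qed.

Lemma C1 q : is_policyH q -> forall m pr y yp, size yp = m ->
  PsS (embedS (qsOf q)) m pr y yp = PsS q m pr y yp.
Proof.
move=> HQ.
have HM : forall m pr yp, size yp = m -> Mf (embedS (qsOf q)) m pr yp = Mf q m pr yp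
   -> forall y, PsS (embedS (qsOf q)) m pr y yp = PsS q m pr y yp.
  move=> m [pw w] yp Hy EM y; rewrite PsS_embed // EM /= /qsOf.
  case: eqP => M0.
    rewrite M0 mul0r; apply/esym/eqP; rewrite eq_le PsS_ge0 // andbT -M0 -PsS_sum //.
    by apply: (@le_sum1 R _ (fun y => PsS q m (pw, w) y yp)) => j; apply: PsS_ge0.
  by rewrite mulrC divfK //; apply/eqP.
suff HMf : forall m pr yp, size yp = m -> Mf (embedS (qsOf q)) m pr yp = Mf q m pr yp.
  by move=> m pr y yp Hy; apply: HM => //; apply: HMf.
elim=> [|m IH] [pw w] yp Hy; first exact: Mf0.
case: yp Hy => [//|a s] Hy; rewrite lastI in Hy *.
rewrite size_rcons in Hy; case: Hy => Hy.
rewrite !Mf_step //; apply: eq_bigr => z _; congr (_ * _); apply: eq_bigr => pw' _.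
by apply: HM => //; apply: IH.
Qed.


Definition fl m (xs : m.+1.-tuple W) : option W * W := odflt (None, thead xs) (lasttwo xs).
Arguments fl {m} xs.

Lemma fl_E m (xs : m.+1.-tuple W) : lasttwo xs = Some (fl xs).
Proof. by have [p E] := lasttwo_tuple xs; rewrite /fl E. Qed.

Lemma fl_eq m (xs : m.+1.-tuple W) pr : (lasttwo xs == Some pr) = (fl xs == pr).
Proof. by rewrite fl_E. Qed.

Lemma P_simp_coarse Q m : P_simp p1 qx Q m = coarse R _ _ _ _ (@fl m) (P_hist p1 qx Q m).
Proof.
apply/funext => pr; apply/funext => y; apply/funext => yp.
by rewrite /P_simp /coarse /P_hist; apply: eq_bigl => xs; rewrite fl_eq.
Qed.

Lemma P_hist_ge0 Q m : is_policyH Q -> forall xs y yp, 0 <= P_hist p1 qx Q m xs y yp.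
Proof.
move=> HQ xs y yp; apply: jointP_ge0 => //.
by rewrite size_rcons !size_tuple.
Qed.

Lemma CMI_hist_embed qs m : is_policyH (embedS qs) ->
  CMI (P_hist p1 qx (embedS qs) m) = CMI (P_simp p1 qx (embedS qs) m).
Proof.
move=> HQ; rewrite P_simp_coarse.
rewrite (@CMI_coarse_eq R _ _ _ _ (@fl m) _ (@P_hist_ge0 _ m HQ) (fun pr y yp => qs m pr.1 pr.2 yp y)) // => xs y yp.
have Hs : size xs = (size yp).+1 by rewrite !size_tuple.
have E : forall y, P_hist p1 qx (embedS qs) m xs y yp =
   jointP p1 qx (embedS qs) xs yp * qs m (fl xs).1 (fl xs).2 yp y.
  move=> y'; rewrite /P_hist jointP_rcons_y // size_tuple /embedS fl_E.
  by case: (fl xs).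
rewrite E /Pac; congr (_ * _).
under eq_bigr => y' _ do rewrite E.
rewrite -mulr_sumr.
have [_ H1] := @HQs (embedS qs) m xs yp HQ (size_tuple xs) (size_tuple yp).
suff -> : \sum_y qs m (fl xs).1 (fl xs).2 yp y = 1 by rewrite mulr1.
rewrite -H1; apply: eq_bigr => y' _; rewrite /embedS fl_E; by case: (fl xs).
Qed.

Lemma CMI_hist_qs q m : is_policyH q ->
  CMI (P_hist p1 qx (embedS (qsOf q)) m) <= CMI (P_hist p1 qx q m).
Proof.
move=> HQ; rewrite CMI_hist_embed ?qsOf_policy //.
have -> : P_simp p1 qx (embedS (qsOf q)) m = P_simp p1 qx q m.
  apply/funext => pr; apply/funext => y; apply/funext => yp.
  by have := @C1 q HQ m pr y _ (size_tuple yp).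
rewrite P_simp_coarse; exact: (@CMI_coarse_le R _ _ _ _ (@fl m) _ (@P_hist_ge0 _ m HQ)).
exact: qsOf_policy.
Qed.

Lemma le_limn_esup (u v : (\bar R)^nat) : (forall n, (u n <= v n)%E) ->
  (limn_esup u <= limn_esup v)%E.
Proof.
move=> uv; rewrite !limn_esup_lim; apply: lee_lim; [exact: is_cvg_esups|exact: is_cvg_esups|].
apply: nearW => n; apply: ge_ereal_sup => _ [k nk <-].
apply: le_trans (uv k) _; apply: ereal_sup_ubound; by exists k.
Qed.

Lemma objective_qs q : is_policyH q ->
  (objective p1 qx (embedS (qsOf q)) <= objective p1 qx q)%E.
Proof.
move=> HQ; apply: le_limn_esup => n; rewrite lee_fin /avg_leak.
apply: ler_wpM2l; first by rewrite invr_ge0 ler0n.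
by apply: ler_sum => i _; apply: CMI_hist_qs.
Qed.


Lemma P_simp_qs q m : is_policyH q -> P_simp p1 qx (embedS (qsOf q)) m = P_simp p1 qx q m.
Proof.
move=> HQ; apply/funext => pr; apply/funext => y; apply/funext => yp.
by have := @C1 q HQ m pr y _ (size_tuple yp).
Qed.

Lemma take_rcons_le k (s : seq W) x : (k <= size s)%N -> take k (rcons s x) = take k s.
Proof. by move=> H; rewrite -cats1 takel_cat. Qed.

Lemma marg Q k d (G : seq W -> seq W -> R) : is_policyH Q ->
  \sum_(xs : (k + d).-tuple W) \sum_(ys : (k + d).-tuple W)
     jointP p1 qx Q xs ys * G (take k xs) (take k ys)
  = \sum_(xs : k.-tuple W) \sum_(ys : k.-tuple W) jointP p1 qx Q xs ys * G xs ys.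
Proof.
move=> HQ; elim: d => [|d IH].
  rewrite addn0; apply: eq_bigr => xs _; apply: eq_bigr => ys _.
  by rewrite !take_oversize ?size_tuple.
rewrite addnS sum_tuple_rcons -IH; apply: eq_bigr => xs _.
under eq_bigr => x _ do rewrite sum_tuple_rcons.
rewrite exchange_big; apply: eq_bigr => ys _ /=.
have Hxs : size xs = (k + d)%N by rewrite size_tuple.
have Hys : size ys = (k + d)%N by rewrite size_tuple.
transitivity (\sum_x (jointP p1 qx Q xs ys * G (take k xs) (take k ys) * tr xs x) *
    \sum_y Q (k + d)%N (rcons xs x) ys y).
  apply: eq_bigr => x _; rewrite mulr_sumr; apply: eq_bigr => y _.
  rewrite !take_rcons_le ?Hxs ?Hys ?leq_addr // jointP_rcons2 ?Hxs ?Hys //.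
  by ring.
under eq_bigr => x _ do rewrite (@HQs Q (k + d) (rcons xs x) ys HQ _ Hys).2 ?size_rcons ?Hxs // mulr1.
by rewrite -mulr_sumr tr_sum mulr1.
Qed.

Lemma marg' Q k m (G : seq W -> seq W -> R) : is_policyH Q -> (k <= m)%N ->
  \sum_(xs : m.-tuple W) \sum_(ys : m.-tuple W)
     jointP p1 qx Q xs ys * G (take k xs) (take k ys)
  = \sum_(xs : k.-tuple W) \sum_(ys : k.-tuple W) jointP p1 qx Q xs ys * G xs ys.
Proof. by move=> HQ H; rewrite -(subnKC H); apply: marg. Qed.

Definition DS (Q : @policy R W) (D : W -> W -> R) i :=
  \sum_(yp : i.-tuple W) \sum_y \sum_pr P_simp p1 qx Q i pr y yp * D pr.2 y.

Lemma swap4 (A B C D : finType) (F : A -> B -> C -> D -> R) :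
  \sum_a \sum_b \sum_c \sum_d F a b c d = \sum_c \sum_d \sum_a \sum_b F a b c d.
Proof.
transitivity (\sum_(p : A * B) \sum_(q : C * D) F p.1 p.2 q.1 q.2).
  rewrite pair_big; apply: eq_bigr => p _; by rewrite pair_big.
rewrite exchange_big [RHS]pair_big; apply: eq_bigr => q _; by rewrite pair_big.
Qed.

Lemma swap3 (A B C : finType) (F : A -> B -> C -> R) :
  \sum_a \sum_b \sum_c F a b c = \sum_c \sum_a \sum_b F a b c.
Proof.
transitivity (\sum_(p : A * B) \sum_c F p.1 p.2 c); first by rewrite pair_big.
rewrite exchange_big; apply: eq_bigr => c _; by rewrite pair_big.
Qed.

Lemma dist_level Q i x0 (D : W -> W -> R) :
  \sum_(xs : i.+1.-tuple W) \sum_(ys : i.+1.-tuple W)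
     jointP p1 qx Q xs ys * D (last x0 xs) (last x0 ys) = DS Q D i.
Proof.
rewrite /DS.
have E : forall (yp : i.-tuple W) y, \sum_pr P_simp p1 qx Q i pr y yp * D pr.2 y =
    \sum_(t : i.-tuple W) \sum_x jointP p1 qx Q (rcons t x) (rcons yp y) * D x y.
  move=> yp y; rewrite -(sum_lasttwo i (fun xs pr => jointP p1 qx Q xs (rcons yp y) * D pr.2 y)).
  by apply: eq_bigr => pr _; rewrite /P_simp mulr_suml.
under [RHS]eq_bigr => yp _ do under eq_bigr => y _ do rewrite E.
rewrite sum_tuple_rcons.
transitivity (\sum_(t : i.-tuple W) \sum_x \sum_(yp : i.-tuple W) \sum_y
   jointP p1 qx Q (rcons t x) (rcons yp y) * D x y).
  apply: eq_bigr => t _; apply: eq_bigr => x _; rewrite sum_tuple_rcons.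
  apply: eq_bigr => yp _; apply: eq_bigr => y _; by rewrite /= !last_rcons.
exact: swap4.
Qed.

Lemma avg_distE Q D n : is_policyH Q ->
  avg_dist p1 qx D Q n = n%:R^-1 * \sum_(i < n) DS Q D i.
Proof.
move=> HQ.
have step : forall i : 'I_n, \sum_(xs : n.-tuple W) \sum_(ys : n.-tuple W)
   jointP p1 qx Q xs ys * D (tnth xs i) (tnth ys i) = DS Q D i.
  move=> i; case: (pickP (@predT W)) => [x0 _|W0]; last first.
    rewrite /DS big1; last by move=> xs _; have := W0 (tnth xs i).
    symmetry; apply: big1 => yp _; apply: big1 => y _; by have := W0 y.
  rewrite -(dist_level Q i x0 D).
  have := marg' Q i.+1 n (fun s t => D (last x0 s) (last x0 t)) HQ (ltn_ord i).
  move=> /= <-.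
  apply: eq_bigr => xs _; apply: eq_bigr => ys _.
  have L : forall (t : n.-tuple W), tnth t i = last x0 (take i.+1 t).
    move=> t; rewrite (tnth_nth x0) -nth_last size_takel ?size_tuple //.
    by rewrite nth_take.
  by rewrite !L.
rewrite /avg_dist.
transitivity (\sum_(xs : n.-tuple W) \sum_(ys : n.-tuple W) \sum_(i < n)
   n%:R^-1 * (jointP p1 qx Q xs ys * D (tnth xs i) (tnth ys i))).
  apply: eq_bigr => xs _; apply: eq_bigr => ys _.
  by rewrite mulrCA !mulr_sumr.
rewrite -(eq_bigr _ (fun i _ => step i)) mulr_sumr.
transitivity (\sum_(i < n) \sum_(xs : n.-tuple W) \sum_(ys : n.-tuple W)
   n%:R^-1 * (jointP p1 qx Q xs ys * D (tnth xs i) (tnth ys i))); first exact: swap3.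
by apply: eq_bigr => i _; rewrite mulr_sumr; apply: eq_bigr => xs _; rewrite mulr_sumr.
Qed.

Lemma feasible_qs q d Dbar : is_policyH q -> feasible p1 qx d Dbar q ->
  feasible p1 qx d Dbar (embedS (qsOf q)).
Proof.
move=> HQ; rewrite /feasible.
suff -> : (fun n => (avg_dist p1 qx d (embedS (qsOf q)) n)%:E) =
          (fun n => (avg_dist p1 qx d q n)%:E) by [].
apply/funext => n; rewrite !avg_distE ?qsOf_policy //.
congr (_%:E); congr (_ * _); apply: eq_bigr => i _; by rewrite /DS P_simp_qs.
exact: qsOf_policy.
Qed.


Lemma PY_rcons Q m yp y :
  \sum_pr P_simp p1 qx Q m pr y yp = PY p1 qx Q m.+1 (rcons yp y).
Proof.
rewrite /P_simp (sum_lasttwo m (fun xs pr => jointP p1 qx Q xs (rcons yp y))).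
by rewrite /PY sum_tuple_rcons.
Qed.

Lemma PY_step Q m yp : is_policyH Q -> size yp = m ->
  \sum_y PY p1 qx Q m.+1 (rcons yp y) = PY p1 qx Q m yp.
Proof.
move=> HQ Hy; rewrite /PY exchange_big /=.
transitivity (\sum_(xs : m.+1.-tuple W) jointP p1 qx Q xs yp).
  apply: eq_bigr => xs _.
  under eq_bigr => y _ do rewrite jointP_rcons_y ?size_tuple ?Hy //.
  by rewrite -mulr_sumr (@HQs Q m xs yp HQ (size_tuple xs) Hy).2 mulr1.
rewrite sum_tuple_rcons; apply: eq_bigr => t _ /=.
under eq_bigr => x _ do rewrite jointP_rcons_x ?size_tuple ?Hy //.
by rewrite -mulr_sumr tr_sum mulr1.
Qed.

Lemma PY_ge0 Q m ys : is_policyH Q -> (size ys <= m)%N -> 0 <= PY p1 qx Q m ys.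
Proof. by move=> HQ H; apply: sumr_ge0 => xs _; apply: jointP_ge0; rewrite ?size_tuple. Qed.

Lemma P_simp_ge0 Q m pr y yp : is_policyH Q -> 0 <= P_simp p1 qx Q m pr y yp.
Proof. by move=> HQ; apply: PsS_ge0 => //; rewrite size_tuple. Qed.

Lemma sum3_rev (A B C : finType) (F : A -> B -> C -> R) :
  \sum_a \sum_b \sum_c F a b c = \sum_c \sum_b \sum_a F a b c.
Proof. by rewrite swap3; apply: eq_bigr => c _; rewrite exchange_big. Qed.

Lemma CMI_simp_explicit qs m : is_policyH (embedS qs) ->
  CMI (P_simp p1 qx (embedS qs) m) = explicit_term p1 qx qs m.
Proof.
move=> HQ; rewrite CMIE /explicit_term sum3_rev.
apply: eq_bigr => yp _; apply: eq_bigr => y _; apply: eq_bigr => pr _.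
rewrite xlogrE.
set P := P_simp p1 qx (embedS qs) m.
have Hy := size_tuple yp.
have Pbc_E : Pbc R P y yp = PY p1 qx (embedS qs) m.+1 (rcons yp y) by rewrite /Pbc PY_rcons.
have Pc_E : Pc R P yp = PY p1 qx (embedS qs) m yp.
  rewrite /Pc exchange_big /= -(@PY_step (embedS qs) m yp HQ Hy); apply: eq_bigr => y' _.
  by rewrite PY_rcons.
have Pac_E : Pac R P pr yp = Mf (embedS qs) m pr yp by rewrite /Pac PsS_sum.
have PE : P pr y yp = Mf (embedS qs) m pr yp * qs m pr.1 pr.2 yp y by rewrite /P /P_simp -/(PsS _ m pr y yp) PsS_embed.
rewrite Pbc_E Pc_E Pac_E.
have [e0|nz] := eqVneq (P pr y yp) 0; first by rewrite e0 !mul0r.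
have Ppos : 0 < P pr y yp by rewrite lt_def nz P_simp_ge0.
have h1 : P pr y yp <= PY p1 qx (embedS qs) m.+1 (rcons yp y).
  rewrite -PY_rcons; apply: (@le_sum1 R _ (fun pr => P pr y yp)) => j; exact: P_simp_ge0.
have h2 : PY p1 qx (embedS qs) m.+1 (rcons yp y) <= PY p1 qx (embedS qs) m yp.
  rewrite -(@PY_step (embedS qs) m yp HQ Hy).
  apply: (@le_sum1 R _ (fun y => PY p1 qx (embedS qs) m.+1 (rcons yp y))) => j.
  by apply: PY_ge0; rewrite // size_rcons Hy.
have M0 : Mf (embedS qs) m pr yp != 0.
  by apply: contraNneq nz => M0; rewrite PE M0 mul0r.
have Y1 : PY p1 qx (embedS qs) m.+1 (rcons yp y) != 0 by rewrite gt_eqF // (lt_le_trans Ppos h1).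
have Y0 : PY p1 qx (embedS qs) m yp != 0 by rewrite gt_eqF // (lt_le_trans Ppos (le_trans h1 h2)).
congr (_ * ln _); rewrite PE; field.
by rewrite M0 Y1 Y0.
Qed.

Lemma polP_sum1 (Q : @policy R W) m xs : is_policyH Q -> (m <= size xs)%N ->
  \sum_(ys : m.-tuple W) polP Q xs ys = 1.
Proof.
move=> HQ; elim: m => [|m IH] H; first by rewrite sum_tuple0 polP_nil.
rewrite sum_tuple_rcons -(IH (ltnW H)); apply: eq_bigr => ys _ /=.
under eq_bigr => y _ do rewrite polP_rcons.
rewrite -mulr_sumr size_tuple.
rewrite (@HQs Q m (take m.+1 xs) ys HQ _ (size_tuple ys)).2 ?mulr1 //.
by rewrite size_takel.
Qed.

Definition LR (Q : @policy R W) (xs ys : seq W) := ln (polP Q xs ys / PY p1 qx Q (size ys) ys).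

Definition Ssum (Q : @policy R W) m := \sum_(xs : m.-tuple W) \sum_(ys : m.-tuple W)
   jointP p1 qx Q xs ys * LR Q xs ys.

Lemma leak_S (Q : @policy R W) n : is_policyH Q -> leakage p1 qx Q n = Ssum Q n.
Proof.
move=> HQ; rewrite /leakage /MI /Ssum; apply: eq_bigr => xs _; apply: eq_bigr => ys _.
rewrite xlogrE /LR size_tuple.
have [e0|nz] := eqVneq (jointP p1 qx Q xs ys) 0; first by rewrite e0 !mul0r.
congr (_ * ln _).
have -> : \sum_(b' : n.-tuple W) jointP p1 qx Q xs b' = chainP p1 qx xs.
  by rewrite /jointP -mulr_sumr polP_sum1 ?mulr1 ?size_tuple.
have c0 : chainP p1 qx xs != 0 by apply: contraNneq nz => c0; rewrite /jointP c0 mul0r.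
rewrite /jointP -mulf_div divff // mul1r /PY.
by [].
Qed.

Lemma S_step qs m : is_policyH (embedS qs) ->
  Ssum (embedS qs) m.+1 = Ssum (embedS qs) m + explicit_term p1 qx qs m.
Proof.
move=> HQ; set Q := embedS qs.
pose T (t : seq W) x (yp : seq W) y := ln (Q m (rcons t x) yp y /
    (PY p1 qx Q m.+1 (rcons yp y) / PY p1 qx Q m yp)).
transitivity (\sum_(t : m.-tuple W) \sum_x \sum_(yp : m.-tuple W) \sum_y
   (jointP p1 qx Q (rcons t x) (rcons yp y) * LR Q t yp + jointP p1 qx Q (rcons t x) (rcons yp y) * T t x yp y)).
  rewrite /Ssum sum_tuple_rcons; apply: eq_bigr => t _; apply: eq_bigr => x _.
  rewrite sum_tuple_rcons; apply: eq_bigr => yp _; apply: eq_bigr => y _ /=.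
  rewrite -mulrDr.
  have Ht := size_tuple t; have Hy := size_tuple yp.
  have [e0|nz] := eqVneq (jointP p1 qx Q (rcons t x) (rcons yp y)) 0; first by rewrite e0 !mul0r.
  have JE : jointP p1 qx Q (rcons t x) (rcons yp y) = jointP p1 qx Q t yp * tr t x * Q m (rcons t x) yp y.
    by rewrite jointP_rcons2 ?Ht ?Hy.
  have J0 : 0 <= jointP p1 qx Q t yp by apply: jointP_ge0; rewrite ?Ht ?Hy.
  have Q0 : 0 <= Q m (rcons t x) yp y.
    by apply: (@HQs Q m (rcons t x) yp HQ _ Hy).1; rewrite size_rcons Ht.
  have Jpos : 0 < jointP p1 qx Q t yp.
    rewrite lt_def J0 andbT; apply: contraNneq nz => e; by rewrite JE e !mul0r.
  have Qpos : 0 < Q m (rcons t x) yp y.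
    rewrite lt_def Q0 andbT; apply: contraNneq nz => e; by rewrite JE e mulr0.
  have polpos : 0 < polP Q t yp.
    have p0 : 0 <= polP Q t yp by apply: polP_ge0; rewrite ?Ht ?Hy.
    rewrite lt_def p0 andbT; apply: contraTneq Jpos => e.
    by rewrite /jointP e mulr0 ltxx.
  have PY0 : jointP p1 qx Q t yp <= PY p1 qx Q m yp.
    apply: (@le_sum1 R _ (fun xs : m.-tuple W => jointP p1 qx Q xs yp) t) => j.
    by apply: jointP_ge0; rewrite ?size_tuple ?Hy.
  have PY1 : jointP p1 qx Q (rcons t x) (rcons yp y) <= PY p1 qx Q m.+1 (rcons yp y).
    apply: (@le_sum1 R _ (fun xs : m.+1.-tuple W => jointP p1 qx Q xs (rcons yp y)) [tuple of rcons t x]) => j.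
    by apply: jointP_ge0; rewrite ?size_tuple ?size_rcons ?Hy.
  have Jpos' : 0 < jointP p1 qx Q (rcons t x) (rcons yp y).
    by rewrite lt_def nz jointP_ge0 // !size_rcons Ht Hy.
  have y0 : 0 < PY p1 qx Q m yp by apply: lt_le_trans PY0.
  have y1 : 0 < PY p1 qx Q m.+1 (rcons yp y) by apply: lt_le_trans PY1.
  congr (_ * _); rewrite /LR /T size_rcons Hy.
  rewrite polP_rcons polP_rcons_x ?Ht ?Hy // take_oversize ?size_rcons ?Ht ?Hy //.
  rewrite -lnM ?posrE ?divr_gt0 //; congr ln; field.
  by rewrite !gt_eqF.
under eq_bigr => t _ do under eq_bigr => x _ do under eq_bigr => yp _ do rewrite big_split /=.
under eq_bigr => t _ do under eq_bigr => x _ do rewrite big_split /=.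
under eq_bigr => t _ do rewrite big_split /=.
rewrite big_split /=; congr (_ + _).
  rewrite /Ssum; apply: eq_bigr => t _.
  rewrite exchange_big; apply: eq_bigr => yp _ /=.
  have Ht := size_tuple t; have Hy := size_tuple yp.
  transitivity (\sum_x (jointP p1 qx Q t yp * LR Q t yp * tr t x) * \sum_y Q m (rcons t x) yp y).
    apply: eq_bigr => x _; rewrite mulr_sumr; apply: eq_bigr => y _.
    by rewrite jointP_rcons2 ?Ht ?Hy //; ring.
  under eq_bigr => x _ do rewrite (@HQs Q m (rcons t x) yp HQ _ Hy).2 ?size_rcons ?Ht // mulr1.
  by rewrite -mulr_sumr tr_sum mulr1.
rewrite /explicit_term.
have E : forall (yp : m.-tuple W) y, \sum_pr xlogr (P_simp p1 qx Q m pr y yp)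
      (qs m pr.1 pr.2 yp y / (PY p1 qx Q m.+1 (rcons yp y) / PY p1 qx Q m yp)) =
    \sum_(t : m.-tuple W) \sum_x jointP p1 qx Q (rcons t x) (rcons yp y) * T t x yp y.
  move=> yp y.
  pose F := fun xs (pr : option W * W) => jointP p1 qx Q xs (rcons yp y) *
     ln (qs m pr.1 pr.2 yp y / (PY p1 qx Q m.+1 (rcons yp y) / PY p1 qx Q m yp)).
  transitivity (\sum_pr \sum_(xs : m.+1.-tuple W | lasttwo xs == Some pr) F xs pr).
    by apply: eq_bigr => pr _; rewrite xlogrE /P_simp mulr_suml.
  rewrite (sum_lasttwo m F); apply: eq_bigr => t _; apply: eq_bigr => x _ /=.
  by rewrite /F /T /Q /embedS lasttwo_rcons.
under [RHS]eq_bigr => yp _ do under eq_bigr => y _ do rewrite E.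
exact: swap4.
Qed.

Lemma leak_explicit qs n : is_policyH (embedS qs) ->
  leakage p1 qx (embedS qs) n = \sum_(i < n) explicit_term p1 qx qs i.
Proof.
move=> HQ; rewrite leak_S //; elim: n => [|n IH].
  rewrite big_ord0 /Ssum !sum_tuple0 /LR /= polP_nil.
  have -> : PY p1 qx (embedS qs) 0 [::] = 1.
    by rewrite /PY sum_tuple0 /jointP polP_nil /chainP mulr1.
  by rewrite divr1 ln1 mulr0.
by rewrite S_step // big_ord_recr /= IH.
Qed.

End Seq.

Theorem theorem1 (R : realType) (W : finType)
  (p1 : W -> R) (qx : W -> W -> R) (d : W -> W -> R) (Dbar : R) :
  is_pmf p1 -> is_kernel qx ->
  (forall q : policy, is_policyH q -> feasible p1 qx d Dbar q ->
     exists qs : spolicy,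
       [/\ is_policyH (embedS qs), feasible p1 qx d Dbar (embedS qs)
         & (objective p1 qx (embedS qs) <= objective p1 qx q)%E])
  /\
  (forall qs : spolicy, is_policyH (embedS qs) -> forall n : nat,
     leakage p1 qx (embedS qs) n
       = \sum_(i < n) CMI (P_simp p1 qx (embedS qs) i)
     /\ \sum_(i < n) CMI (P_simp p1 qx (embedS qs) i)
       = \sum_(i < n) explicit_term p1 qx qs i).
Proof.
move=> Hp Hk; split.
  move=> q HQ Hf; exists (qsOf _ _ p1 qx q); split.
  - exact: qsOf_policy.
  - exact: feasible_qs.
  - exact: objective_qs.
move=> qs HQ n.
have E : \sum_(i < n) CMI (P_simp p1 qx (embedS qs) i) = \sum_(i < n) explicit_term p1 qx qs i.
  by apply: eq_bigr => i _; apply: CMI_simp_explicit.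
split => //; rewrite E; exact: leak_explicit.
Qed.
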